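(* Let $p\in\mathbb{R}[x_1,x_2]_{2d}$ (not necessarily a sum of squares). For every $\mathbf{u}=(u_1,u_2)\in\mathbb{R}[x_1,x_2]_d^2$ with $\nabla f_p(\mathbf{u})=0$ and $\nabla^2 f_p(\mathbf{u})\succeq0$, the form $u_1^2+u_2^2$ is the projection of $p$ onto the cone $\Sigma[x_1,x_2]_{2d}$ with respect to the inner product defining $f_p$; that is, $f_p(\mathbf{u})=\|u_1^2+u_2^2-p\|^2\le\|q-p\|^2$ for all $q\in\Sigma[x_1,x_2]_{2d}$.
   Context: $\mathbb{R}[x_1,x_2]_n$ denotes the space of real binary forms (homogeneous polynomials in $x_1,x_2$) of degree $n$, and $\Sigma[x_1,x_2]_{2d}$ the cone of sums of squares of binary forms of degree $d$. Fix any inner product $\langle\cdot,\cdot\rangle$ on $\mathbb{R}[x_1,x_2]_{2d}$ with norm $\|\cdot\|$, and let $f_p(\mathbf{u})=\|u_1^2+u_2^2-p\|^2$ on $\mathbb{R}[x_1,x_2]_d^2$; derivatives are with respect to this finite-dimensional real vector space ($\nabla f_p(\mathbf{u})=0$: all first directional derivatives vanish; $\nabla^2 f_p(\mathbf{u})\succeq0$: all second directional derivatives are nonnegative). *)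

(* Defs.v *)
From HB Require Import structures.
From mathcomp Require Import all_boot all_order all_algebra.
From mathcomp Require Import all_classical all_reals all_analysis.
Set Implicit Arguments. Unset Strict Implicit. Unset Printing Implicit Defensive.
Import Order.TTheory GRing.Theory Num.Theory.
Local Open Scope ring_scope.

(* A real binary form of degree n is represented by its coefficient row
   vector c : 'rV_(n.+1), standing for  \sum_(k <= n) c_k x1^k x2^(n-k). *)
Definition bform (R : realType) (n : nat) := 'rV[R]_(n.+1).

Definition bfmul (R : realType) (d e : nat) (u : bform R d) (v : bform R e)
  : bform R (d + e) :=
  \row_(k < (d + e).+1)
     \sum_(i < d.+1) \sum_(j < e.+1 | (i + j == k)%N) u 0 i * v 0 j.

Definition is_sos (R : realType) (d : nat) (q : bform R (d + d)) : Prop :=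
  exists (m : nat) (g : 'I_m -> bform R d), q = \sum_(i < m) bfmul (g i) (g i).

Definition is_inner_product (R : realType) (V : lmodType R) (ip : V -> V -> R)
  : Prop :=
  [/\ (forall x y, ip x y = ip y x),
      (forall (a : R) (x y z : V), ip (a *: x + y) z = a * ip x z + ip y z)
    & (forall x, x != 0 -> 0 < ip x x)].

Definition ipnorm (R : realType) (V : lmodType R) (ip : V -> V -> R) (x : V) : R :=
  Num.sqrt (ip x x).

Definition f_p (R : realType) (d : nat) (ip : bform R (d + d) -> bform R (d + d) -> R)
  (p : bform R (d + d)) (u1 u2 : bform R d) : R :=
  ipnorm ip (bfmul u1 u1 + bfmul u2 u2 - p) ^+ 2.

(* Main.v *)
Require Import Defs.
From HB Require Import structures.
From mathcomp Require Import all_boot all_order all_algebra.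
From mathcomp Require Import all_classical all_reals all_analysis.
From mathcomp Require Import ring lra zify.
Set Implicit Arguments. Unset Strict Implicit. Unset Printing Implicit Defensive.
Import Order.TTheory GRing.Theory Num.Theory.
Local Open Scope ring_scope.


Lemma size_mul_le2 (R : realFieldType) (p q : {poly R}) (a b : nat) : (size p <= a.+1)%N -> (size q <= b.+1)%N ->
  (size (p * q)%R <= (a + b).+1)%N.
Proof.
move=> hp hq; have := size_polyMleq p q; lia.
Qed.

Lemma sylv (R : realFieldType) (y1 y2 : {poly R}) (e d : nat) :
  coprimep y1 y2 -> size y1 = e.+1 -> (size y2 <= e.+1)%N -> (e <= d)%N ->
  forall q : {poly R}, (size q <= (d + e).+1)%N ->
  exists z1 z2 : {poly R}, [/\ (size z1 <= d.+1)%N, (size z2 <= d.+1)%N & q = y1 * z1 + y2 * z2].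
Proof.
move=> /Bezout_eq1_coprimepP [[s t] /= Hst] hy1 hy2 hed q hq.
have y1n0 : y1 != 0 by rewrite -size_poly_eq0 hy1.
pose a := (t * q) %/ y1; pose r := (t * q) %% y1.
have Htq : t * q = a * y1 + r by rewrite /a /r -divp_eq.
have Hq : q = y1 * (s * q + a * y2) + y2 * r.
  have Hr : r = t * q - a * y1 by rewrite Htq; ring.
  rewrite Hr -{1}[q]mul1r -Hst; ring.
have hr : (size r <= e)%N by have := ltn_modpN0 (t * q) y1n0; rewrite hy1.
exists (s * q + a * y2), r; split => //.
- have h2 : (size (y2 * r)%R <= (d + e).+1)%N.
    have := size_mul_le2 hy2 (leq_trans hr (leqnSn _)) ; move/leq_trans; apply.
    have : (e <= d)%N := hed. lia.
  have h3 : (size (y1 * (s * q + a * y2))%R <= (d + e).+1)%N.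
    have -> : y1 * (s * q + a * y2) = q - y2 * r by rewrite {2}Hq; ring.
    apply: leq_trans (size_add _ _) _; rewrite geq_max hq /= size_opp //.
  case E: (s * q + a * y2 == 0); first by rewrite (eqP E) size_poly0.
  move: h3; rewrite size_mul ?E // hy1 => h3.
  move: h3; case: (size _) => [|n] //= h3; lia.
- apply: leq_trans hr _; lia.
Qed.



Ltac gen_sizes := repeat match goal with |- context [@size ?T ?x] =>
  let s := fresh "s" in move: (@size T x) => s end.
Ltac slia := gen_sizes; lia.

Lemma poly_small (R : ringType) (k : nat) (p : {poly R}) : (size p <= k)%N ->
  p = \sum_(i < k) p`_i *: 'X^i.
Proof.
move=> hp; rewrite -poly_def; apply/polyP => i; rewrite coef_poly.
by case: ltnP => // hi; rewrite nth_default //; apply: leq_trans hp hi.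
Qed.

Lemma size_mulR (R : realFieldType) (p q : {poly R}) : p != 0 -> q != 0 ->
  size (p * q) = (size p + size q).-1.
Proof. exact: size_mul. Qed.
Lemma size_divpR (R : realFieldType) (p q : {poly R}) : q != 0 ->
  size (p %/ q)%R = (size p - (size q).-1)%N.
Proof. exact: size_divp. Qed.
Lemma ltn_modpR (R : realFieldType) (p q : {poly R}) : q != 0 ->
  (size (p %% q)%R < size q)%N.
Proof. exact: ltn_modpN0. Qed.

Lemma core_poly (R : realFieldType) (d : nat) (u1 u2 : {poly R}) (L : {poly R} -> R)
  (LD : forall x y, L (x + y) = L x + L y)
  (LZ : forall (c : R) x, L (c *: x) = c * L x)
  (Hu1 : size u1 = d.+1) (Hu2 : (size u2 <= d.+1)%N)
  (HG1 : forall z : {poly R}, (size z <= d.+1)%N -> L (u1 * z) = 0)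
  (HG2 : forall z : {poly R}, (size z <= d.+1)%N -> L (u2 * z) = 0)
  (HK1 : forall v1 v2 : {poly R}, (size v1 <= d.+1)%N -> (size v2 <= d.+1)%N ->
     u1 * v1 + u2 * v2 = 0 -> 0 <= L (v1 * v1 + v2 * v2))
  (HK2 : forall v1 v2 : {poly R}, (size v1 <= d.+1)%N -> (size v2 <= d.+1)%N ->
     u1 * v1 + u2 * v2 = 0 -> L (v1 * v1 + v2 * v2) = 0 ->
     forall z1 z2 : {poly R}, (size z1 <= d.+1)%N -> (size z2 <= d.+1)%N ->
     L (v1 * z1 + v2 * z2) = 0) :
  forall g : {poly R}, (size g <= d.+1)%N -> 0 <= L (g * g).
Proof.
have L0 : L 0 = 0 by rewrite -(scale0r 0) LZ mul0r.
have LN : forall x, L (- x) = - L x by move=> x; rewrite -scaleN1r LZ mulN1r.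
have u1n0 : u1 != 0 by rewrite -size_poly_eq0 Hu1.
have [G [y1 [y2 [Gn0 cop Eu1 Eu2]]]] : exists G y1 y2 : {poly R},
    [/\ G != 0, coprimep y1 y2, u1 = y1 * G & u2 = y2 * G].
  exists (gcdp u1 u2), (u1 %/ gcdp u1 u2), (u2 %/ gcdp u1 u2); split.
  - by rewrite gcdp_eq0 negb_and u1n0.
  - by apply: coprimep_div_gcd; rewrite u1n0.
  - by rewrite divpK // dvdp_gcdl.
  - by rewrite divpK // dvdp_gcdr.
have [k sG] : exists k, size G = k.+1.
  by exists (size G).-1; rewrite prednK // lt0n size_poly_eq0.
have y1n0 : y1 != 0 by apply: contraNneq u1n0 => h; rewrite Eu1 h mul0r.
have kd : (k <= d)%N.
  have : (0 < size y1)%N by rewrite size_poly_gt0.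
  by move: Hu1; rewrite Eu1 size_mulR // sG; lia.
have [e de] : exists e, d = (e + k)%N by exists (d - k)%N; lia.
have sy1 : size y1 = e.+1.
  have : (0 < size y1)%N by rewrite size_poly_gt0.
  by move: Hu1; rewrite Eu1 size_mulR // sG; lia.
have sy2 : (size y2 <= e.+1)%N.
  case: (eqVneq y2 0) => [->|y2n0]; first by rewrite size_poly0.
  have : (0 < size y2)%N by rewrite size_poly_gt0.
  by move: Hu2; rewrite Eu2 size_mulR // sG; lia.
have ed : (e <= d)%N by lia.
have LG : forall q : {poly R}, (size q <= (d + e).+1)%N -> L (q * G) = 0.
  move=> q hq; have [z1 [z2 [h1 h2 ->]]] := sylv cop sy1 sy2 ed hq.
  have -> : (y1 * z1 + y2 * z2) * G = u1 * z1 + u2 * z2 by rewrite Eu1 Eu2; ring.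
  by rewrite LD HG1 // HG2 // addr0.
pose lam (f : {poly R}) := L (f %% G).
have lamE : forall f : {poly R}, (size f <= (d + d).+1)%N -> lam f = L f.
  move=> f hf; rewrite /lam {2}(divp_eq f G) LD LG ?add0r //.
  rewrite size_divpR // sG /=; move: hf; move: (size f) => sf; lia.
have lamD : forall x y : {poly R}, lam (x + y) = lam x + lam y by move=> x y; rewrite /lam modpD LD.
have lamZ : forall (c : R) (x : {poly R}), lam (c *: x) = c * lam x by move=> c x; rewrite /lam modpZl LZ.
have lamM : forall x y : {poly R}, lam (x * y) = lam (x * (y %% G)) by move=> x y; rewrite /lam modp_mul.
have smod : forall x : {poly R}, (size (x %% G)%R <= k)%N.
  by move=> x; have := ltn_modpR x Gn0; rewrite sG.
pose m := y1 * y1 + y2 * y2.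
have sm : (size m <= (e + e).+1)%N.
  rewrite /m; apply: leq_trans (size_add _ _) _; rewrite geq_max.
  by apply/andP; split; apply: size_mul_le2; rewrite ?sy1.
have lamMl : forall x y : {poly R}, lam (x * y) = lam ((x %% G) * y).
  by move=> x y; rewrite mulrC lamM mulrC.
have lamMM : forall x y : {poly R}, lam (x * y) = lam ((x %% G) * (y %% G)).
  by move=> x y; rewrite lamM lamMl.
have szk : forall x : {poly R}, (size (x %% G)%R <= (k.-1).+1)%N.
  by move=> x; apply: leq_trans (smod x) _; lia.
have lam_mw : forall w : {poly R}, lam (m * (w * w)) = L (m * ((w %% G) * (w %% G))).
  move=> w; rewrite -lamE.
    have E1 : m * w * (w %% G) = (w %% G * m) * w.
      by move: (w %% G) => w1; ring.
    rewrite mulrA [LHS]lamM E1 [LHS]lamM; congr lam; by move: (w %% G) => w1; ring.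
  apply: leq_trans (size_mul_le2 sm (size_mul_le2 (szk w) (szk w))) _; lia.
have vfacts : forall w : {poly R},
   [/\ (size (y2 * (w %% G))%R <= d.+1)%N, (size (- (y1 * (w %% G)))%R <= d.+1)%N,
        u1 * (y2 * (w %% G)) + u2 * (- (y1 * (w %% G))) = 0 &
        lam (m * (w * w)) = L ((y2 * (w %% G)) * (y2 * (w %% G)) +
                             (- (y1 * (w %% G))) * (- (y1 * (w %% G))))].
  move=> w; split.
  - by have := size_mul_le2 sy2 (szk w); slia.
  - by rewrite size_opp; have := size_mul_le2 (eq_leq sy1) (szk w); slia.
  - by rewrite Eu1 Eu2; move: (w %% G) => w1; ring.
  - by rewrite lam_mw /m; move: (w %% G) => w1; congr L; ring.
have posi : forall w : {poly R}, 0 <= lam (m * (w * w)).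
  by move=> w; case: (vfacts w) => h1 h2 h3 ->; apply: HK1.
have nul : forall w : {poly R}, lam (m * (w * w)) = 0 -> forall x : {poly R}, lam (w * x) = 0.
  move=> w hw x; case: (vfacts w) => h1 h2 h3 h4.
  have hx : (size (x %% G)%R <= (d + e).+1)%N by have := smod x; slia.
  have [a1 [a2 [ha1 ha2 Ex]]] := sylv cop sy1 sy2 ed hx.
  have hv := HK2 _ _ h1 h2 h3 (etrans (esym h4) hw) a2 (-a1)%R ha2 (leq_trans (eq_leq (size_opp a1)) ha1).
  clear h1 h2 h3 h4.
  rewrite lamMM lamE.
    rewrite Ex -hv; congr L; move: (w %% G) => w1; ring.
  by have := size_mul_le2 (szk w) (szk x); slia.
have lam0 : lam 0 = 0 by rewrite /lam mod0p L0.
have lam_sum : forall (I : finType) (F : I -> {poly R}), lam (\sum_i F i) = \sum_i lam (F i).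
  by move=> I F; apply: (big_morph lam lamD lam0).
pose toPk (c : 'rV[R]_k) : {poly R} := \sum_(i < k) c 0 i *: 'X^i.
pose Mf (f : {poly R}) : 'M[R]_k := \matrix_(i, j) lam (f * ('X^i * 'X^j)).
have Mf_row : forall (f : {poly R}) (c : 'rV[R]_k) j, (c *m Mf f) 0 j = lam (f * toPk c * 'X^j).
  move=> f c j; rewrite !mxE /toPk mulr_sumr mulr_suml lam_sum; apply: eq_bigr => i _.
  by rewrite mxE -lamZ; congr lam; rewrite -!scalerAr -scalerAl mulrA.
have lam_ext : forall f x : {poly R}, lam (f * x) = \sum_(j < k) (x %% G)`_j * lam (f * 'X^j).
  move=> f x; rewrite lamM {1}(poly_small (smod x)) mulr_sumr lam_sum.
  by apply: eq_bigr => j _; rewrite -lamZ scalerAr.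
have toPk_mod : forall x : {poly R}, toPk (\row_(i < k) (x %% G)`_i) = x %% G.
  move=> x; rewrite /toPk [RHS](poly_small (smod x)); apply: eq_bigr => i _.
  by rewrite mxE.
have kc : forall c : 'rV[R]_k, c *m Mf m = 0 -> c *m Mf 1 = 0.
  move=> c hc.
  have hw : forall j : 'I_k, lam (m * toPk c * 'X^j) = 0.
    by move=> j; rewrite -Mf_row hc mxE.
  have hmw : lam (m * (toPk c * toPk c)) = 0.
    rewrite mulrA lam_ext big1 // => j _; by rewrite hw mulr0.
  apply/rowP => j; rewrite Mf_row mxE mul1r; exact: nul.
have kcM : forall p (A : 'M[R]_(p, k)), A *m Mf m = 0 -> A *m Mf 1 = 0.
  move=> p A hA; apply/row_matrixP => i; rewrite row_mul row0; apply: kc.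
  by rewrite -row_mul hA row0.
have Mf_sym : forall f, (Mf f)^T = Mf f.
  by move=> f; apply/matrixP => i j; rewrite !mxE (mulrC 'X^j).
have range : forall b : 'rV[R]_k, exists c : 'rV[R]_k, b *m Mf 1 = c *m Mf m.
  move=> b; have : (b *m Mf 1 <= Mf m)%MS.
    rewrite submxE -mulmxA; apply/eqP.
    have h1 : (cokermx (Mf m))^T *m Mf m = 0.
      by have := congr1 trmx (mulmx_coker (Mf m)); rewrite trmx_mul Mf_sym trmx0.
    have h2 := kcM _ _ h1.
    have -> : Mf 1 *m cokermx (Mf m) = 0.
      by have := congr1 trmx h2; rewrite trmx_mul Mf_sym trmxK trmx0.
    by rewrite mulmx0.
  by case/submxP => D ->; exists D.
move=> g hg.
have [c hc] := range (\row_(i < k) (g %% G)`_i).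
set w := toPk c.
have hgx : forall x : {poly R}, lam (g * x) = lam (m * w * x).
  move=> x; rewrite lam_ext [RHS]lam_ext; apply: eq_bigr => j _; congr (_ * _).
  by rewrite lamMl -toPk_mod -[_ * _]mul1r -Mf_row -hc Mf_row mulrA.
rewrite -lamE; last by have := size_mul_le2 hg hg; slia.
rewrite hgx mulrC hgx.
have -> : m * w * (m * w) = m * ((y1 * w) * (y1 * w)) + m * ((y2 * w) * (y2 * w)).
  by rewrite /m; ring.
by rewrite lamD addr_ge0.
Qed.
Definition tP (R : realType) (t : R) (n j : nat) : {poly R} :=
  'X^j * (1 + t *: 'X) ^+ (n - j).
Definition toP (R : realType) (t : R) (n : nat) (c : bform R n) : {poly R} :=
  \sum_(j < n.+1) c 0 j *: tP t n j.

Lemma powfacts (R : realType) (t : R) m :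
  [/\ (size ((1 + t *: 'X) ^+ m) <= m.+1)%N, ((1 + t *: 'X) ^+ m)`_0 = 1
    & ((1 + t *: 'X) ^+ m)`_m = t ^+ m].
Proof.
elim: m => [|m [h1 h2 h3]].
  by rewrite !expr0 size_poly1 coef1.
have E : (1 + t *: 'X) ^+ m.+1 = (1 + t *: 'X) ^+ m + t *: ('X * (1 + t *: 'X) ^+ m).
  by rewrite exprS mulrDl mul1r -scalerAl.
rewrite E; split.
- apply: leq_trans (size_add _ _) _; rewrite geq_max; apply/andP; split.
    by apply: leq_trans h1 _.
  apply: leq_trans (size_scale_leq _ _) _.
  have := size_mul_le2 (p := 'X) (a := 1) (eq_leq (size_polyX R)) h1; by rewrite add1n.
- by rewrite coefD coefZ coefXM /= h2 mulr0 addr0.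
- rewrite coefD coefZ coefXM /= h3 nth_default // exprS; ring.
Qed.



Lemma tP_size (R : realType) (t : R) n j : (j <= n)%N -> (size (tP t n j) <= n.+1)%N.
Proof.
move=> hj; have [h1 _ _] := powfacts t (n - j).
have := size_mul_le2 (eq_leq (size_polyXn R j)) h1.
by rewrite /tP; slia.
Qed.

Lemma tP_coef_lt (R : realType) (t : R) n j i : (i < j)%N -> (tP t n j)`_i = 0.
Proof. by move=> h; rewrite /tP coefXnM h. Qed.

Lemma tP_coef_diag (R : realType) (t : R) n j : (tP t n j)`_j = 1.
Proof. by rewrite /tP coefXnM ltnn subnn; have [_ -> _] := powfacts t (n - j). Qed.

Lemma tP_coef_top (R : realType) (t : R) n j : (j <= n)%N -> (tP t n j)`_n = t ^+ (n - j).
Proof.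
move=> h; rewrite /tP coefXnM ltnNge h /=.
by have [_ _ ->] := powfacts t (n - j).
Qed.

Lemma tP_mul (R : realType) (t : R) n m i j : (i <= n)%N -> (j <= m)%N ->
  tP t n i * tP t m j = tP t (n + m) (i + j).
Proof.
move=> hi hj; rewrite /tP exprD.
have -> : (n + m - (i + j) = (n - i) + (m - j))%N by lia.
rewrite exprD; ring.
Qed.

Definition Tm (R : realType) (t : R) n : 'M[R]_(n.+1) := \matrix_(j, i) (tP t n j)`_i.

Lemma toP_rV (R : realType) (t : R) n (c : bform R n) : toP t c = rVpoly (c *m Tm t n).
Proof.
apply/polyP => i; rewrite coef_rVpoly /toP coef_sum.
case: insubP => [i' _ <-|hi].
  by rewrite !mxE; apply: eq_bigr => j _; rewrite coefZ mxE.
rewrite big1 // => j _; rewrite coefZ nth_default ?mulr0 //.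
apply: leq_trans (tP_size t (ltnSE (ltn_ord j))) _; by rewrite leqNgt.
Qed.

Lemma Tm_unit (R : realType) (t : R) n : Tm t n \in unitmx.
Proof.
rewrite unitmxE -det_tr det_trig.
  by rewrite big1 ?unitr1 // => i _; rewrite !mxE tP_coef_diag.
by apply/is_trig_mxP => i j hij; rewrite !mxE tP_coef_lt.
Qed.

Definition homog (R : realType) (t : R) n (p : {poly R}) : bform R n :=
  poly_rV p *m invmx (Tm t n).

Lemma toPK (R : realType) (t : R) n (c : bform R n) : homog t n (toP t c) = c.
Proof. by rewrite /homog toP_rV rVpolyK mulmxK // Tm_unit. Qed.

Lemma homogK (R : realType) (t : R) n (p : {poly R}) : (size p <= n.+1)%N ->
  toP t (homog t n p) = p.
Proof. by move=> hp; rewrite toP_rV /homog mulmxKV ?Tm_unit // poly_rV_K. Qed.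

Lemma toP_size (R : realType) (t : R) n (c : bform R n) : (size (toP t c) <= n.+1)%N.
Proof. by rewrite toP_rV; apply: size_poly. Qed.

Lemma toP_inj (R : realType) (t : R) n (c c' : bform R n) : toP t c = toP t c' -> c = c'.
Proof. by move=> h; rewrite -(toPK t c) h toPK. Qed.

Lemma toPD (R : realType) (t : R) n (c c' : bform R n) : toP t (c + c') = toP t c + toP t c'.
Proof. by rewrite /toP -big_split; apply: eq_bigr => j _; rewrite mxE scalerDl. Qed.

Lemma toPZ (R : realType) (t : R) n (a : R) (c : bform R n) : toP t (a *: c) = a *: toP t c.
Proof. by rewrite /toP scaler_sumr; apply: eq_bigr => j _; rewrite mxE scalerA. Qed.

Lemma homogD (R : realType) (t : R) n (p q : {poly R}) :
  homog t n (p + q) = homog t n p + homog t n q.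
Proof. by rewrite /homog linearD mulmxDl. Qed.

Lemma homogZ (R : realType) (t : R) n (a : R) (p : {poly R}) :
  homog t n (a *: p) = a *: homog t n p.
Proof. by rewrite /homog linearZ scalemxAl. Qed.

Lemma toP_top (R : realType) (t : R) n (c : bform R n) :
  (toP t c)`_n = \sum_(j < n.+1) c 0 j * t ^+ (n - j).
Proof.
rewrite /toP coef_sum; apply: eq_bigr => j _.
by rewrite coefZ tP_coef_top // -ltnS.
Qed.

Lemma toP_mul (R : realType) (t : R) n m (u : bform R n) (v : bform R m) :
  toP t (bfmul u v) = toP t u * toP t v.
Proof.
rewrite /toP /bfmul mulr_suml.
under eq_bigr => k _ do rewrite mxE scaler_suml.
rewrite exchange_big /=; apply: eq_bigr => i _.
rewrite mulr_sumr.
under eq_bigr => k _ do rewrite scaler_suml big_mkcond /=.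
rewrite exchange_big /=; apply: eq_bigr => j _.
have hij : (i + j < (n + m).+1)%N.
  by have := ltn_ord i; have := ltn_ord j; lia.
rewrite (bigD1 (Ordinal hij)) //= eqxx big1 ?addr0.
  rewrite -scalerAl -scalerAr scalerA tP_mul //; by rewrite -ltnS.
move=> k hk; case: eqP => // E; move: hk; rewrite -val_eqE /= -E eqxx //.
Qed.

Lemma nonroot (R : realType) (Q : {poly R}) : Q != 0 -> exists t, Q.[t] != 0.
Proof.
move=> Qn0; case: (pselect (exists t, Q.[t] != 0)) => // hn; exfalso.
have hall : forall x, Q.[x] = 0.
  by move=> x; apply/eqP; apply/negPn/negP => hx; apply: hn; exists x.
pose rs := [seq (i%:R : R) | i <- iota 0 (size Q)].
have h1 : all (root Q) rs by apply/allP => x _; apply/rootP.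
have h2 : uniq rs.
  by rewrite map_inj_uniq ?iota_uniq // => a b /eqP; rewrite eqr_nat => /eqP.
by have := max_poly_roots Qn0 h1 h2; rewrite size_map size_iota ltnn.
Qed.

Lemma bfmul_comm (R : realType) d (u v : bform R d) : bfmul u v = bfmul v u.
Proof. by apply: (@toP_inj _ 0); rewrite !toP_mul mulrC. Qed.

Lemma toP0 (R : realType) (t : R) n : toP t (0 : bform R n) = 0.
Proof. by rewrite -(scale0r (0 : bform R n)) toPZ scale0r. Qed.

Lemma toPN (R : realType) (t : R) n (c : bform R n) : toP t (- c) = - toP t c.
Proof. by rewrite -scaleN1r toPZ scaleN1r. Qed.

Lemma choose_t (R : realType) d (u : bform R d) : u != 0 ->
  exists t : R, size (toP t u) = d.+1.
Proof.
move=> un0.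
have [j0 hj0] : exists j0, u 0 j0 != 0.
  case: (pselect (exists j0, u 0 j0 != 0)) => // hn; exfalso; move/eqP: un0; apply.
  apply/rowP => j; rewrite mxE; apply/eqP/negPn/negP => h; apply: hn; by exists j.
pose Q : {poly R} := \sum_(j < d.+1) u 0 j *: 'X^(d - j).
have Qn0 : Q != 0.
  apply/eqP => /(congr1 (fun q : {poly R} => q`_(d - j0))).
  rewrite coef0 /Q coef_sum (bigD1 j0) //= coefZ coefXn eqxx mulr1 big1 ?addr0.
    by move/eqP: hj0.
  move=> j hj; rewrite coefZ coefXn.
  case: eqP => [E|]; last by rewrite mulr0.
  exfalso; move/negP: hj; apply; apply/eqP/val_inj => /=.
  by have := ltn_ord j; have := ltn_ord j0; lia.
have [t ht] := nonroot Qn0.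
exists t; apply/anti_leq/andP; split; first exact: toP_size.
rewrite leqNgt; apply/negP => hlt; move/eqP: ht; apply.
have := nth_default 0 hlt; rewrite toP_top => <-.
by rewrite /Q horner_sum; under eq_bigr => j _ do rewrite hornerZ hornerXn.
Qed.

Lemma core_bform1 (R : realType) d (u1 u2 : bform R d) (Lb : bform R (d + d) -> R)
  (LD : forall x y, Lb (x + y) = Lb x + Lb y)
  (LZ : forall (c : R) x, Lb (c *: x) = c * Lb x)
  (HG1 : forall z, Lb (bfmul u1 z) = 0) (HG2 : forall z, Lb (bfmul u2 z) = 0)
  (HK1 : forall v1 v2, bfmul u1 v1 + bfmul u2 v2 = 0 -> 0 <= Lb (bfmul v1 v1 + bfmul v2 v2))
  (HK2 : forall v1 v2, bfmul u1 v1 + bfmul u2 v2 = 0 -> Lb (bfmul v1 v1 + bfmul v2 v2) = 0 ->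
      forall z1 z2, Lb (bfmul v1 z1 + bfmul v2 z2) = 0) :
  u1 != 0 -> forall g, 0 <= Lb (bfmul g g).
Proof.
move=> u1n0 g.
have [t ht] := choose_t u1n0.
pose Lp (f : {poly R}) := Lb (homog t (d + d) f).
have E : forall (a b : bform R d), Lp (toP t a * toP t b) = Lb (bfmul a b).
  by move=> a b; rewrite /Lp -toP_mul toPK.
have E2 : forall (a b c e : bform R d),
    Lp (toP t a * toP t b + toP t c * toP t e) = Lb (bfmul a b + bfmul c e).
  by move=> a b c e; rewrite /Lp -!toP_mul -toPD toPK.
rewrite -E.
have hz : forall z : {poly R}, (size z <= d.+1)%N -> z = toP t (homog t d z).
  by move=> z hz; rewrite homogK.
have heq : forall v1 v2 : {poly R}, (size v1 <= d.+1)%N -> (size v2 <= d.+1)%N ->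
    toP t u1 * v1 + toP t u2 * v2 = 0 ->
    bfmul u1 (homog t d v1) + bfmul u2 (homog t d v2) = 0.
  move=> v1 v2 h1 h2 h; apply: (@toP_inj _ t).
  by rewrite toPD !toP_mul -!hz // h toP0.
apply: (@core_poly R d (toP t u1) (toP t u2) Lp) => //.
- by move=> x y; rewrite /Lp homogD LD.
- by move=> c x; rewrite /Lp homogZ LZ.
- exact: toP_size.
- by move=> z hz'; rewrite (hz z hz') E.
- by move=> z hz'; rewrite (hz z hz') E.
- move=> v1 v2 h1 h2 h; rewrite (hz v1 h1) (hz v2 h2) E2.
  exact: HK1 (heq _ _ h1 h2 h).
- move=> v1 v2 h1 h2 h h0 z1 z2 hz1 hz2.
  move: h0; rewrite (hz v1 h1) (hz v2 h2) (hz z1 hz1) (hz z2 hz2) !E2 => h0.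
  exact: HK2 (heq _ _ h1 h2 h) h0 _ _.
- exact: toP_size.
Qed.

Lemma bfmul0l (R : realType) n m (v : bform R m) : bfmul (0 : bform R n) v = 0.
Proof. by apply: (@toP_inj _ 0); rewrite toP_mul !toP0 mul0r. Qed.

Lemma bfmul0r (R : realType) n m (v : bform R n) : bfmul v (0 : bform R m) = 0.
Proof. by apply: (@toP_inj _ 0); rewrite toP_mul !toP0 mulr0. Qed.

Lemma core_bform (R : realType) d (u1 u2 : bform R d) (Lb : bform R (d + d) -> R)
  (LD : forall x y, Lb (x + y) = Lb x + Lb y)
  (LZ : forall (c : R) x, Lb (c *: x) = c * Lb x)
  (HG1 : forall z, Lb (bfmul u1 z) = 0) (HG2 : forall z, Lb (bfmul u2 z) = 0)
  (HK1 : forall v1 v2, bfmul u1 v1 + bfmul u2 v2 = 0 -> 0 <= Lb (bfmul v1 v1 + bfmul v2 v2))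
  (HK2 : forall v1 v2, bfmul u1 v1 + bfmul u2 v2 = 0 -> Lb (bfmul v1 v1 + bfmul v2 v2) = 0 ->
      forall z1 z2, Lb (bfmul v1 z1 + bfmul v2 z2) = 0) :
  forall g, 0 <= Lb (bfmul g g).
Proof.
move=> g; case: (eqVneq u1 0) => [u10|u1n0]; last exact: (core_bform1 LD LZ HG1 HG2 HK1 HK2).
case: (eqVneq u2 0) => [u20|u2n0].
  have := HK1 g 0; rewrite u10 u20 !bfmul0l ?bfmul0r !addr0; by apply.
apply: (core_bform1 LD LZ HG2 HG1 _ _ u2n0).
  by move=> v1 v2 h; rewrite addrC; apply: HK1; rewrite addrC.
move=> v1 v2 h h0 z1 z2; rewrite addrC; apply: HK2; rewrite addrC //.
Qed.

Lemma deriv_poly4 (R : realType) (f : R -> R) (c0 c1 c2 c3 c4 : R) :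
  (forall t, f t = c0 + c1 * t + c2 * t ^+ 2 + c3 * t ^+ 3 + c4 * t ^+ 4) ->
  derive1 f 0 = c1 /\ derive1n 2 f 0 = c2 *+ 2.
Proof.
move=> hf.
pose P : {poly R} := c0%:P + c1 *: 'X + c2 *: 'X^2 + c3 *: 'X^3 + c4 *: 'X^4.
have -> : f = horner P.
  by apply/funext => t; rewrite hf /P !hornerE.
have D1 : derive1 (horner P) = horner (P^`()) by rewrite derive.derivE.
split.
  rewrite D1 horner_coef0 coef_deriv /P !coefD !coefZ !coefXn coefX coefC /=.
  ring.
rewrite /derive1n /= D1 -derive.derivE horner_coef0 !coef_deriv /P !coefD !coefZ !coefXn coefX coefC /=.
ring.
Qed.

Lemma S_expand (R : realType) d (u w a b c f : bform R d) (e : R) :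
  bfmul u (a + e *: b) + bfmul w (c + e *: f) =
  (bfmul u a + bfmul w c) + e *: (bfmul u b + bfmul w f).
Proof.
apply: (@toP_inj _ 0); rewrite !(toPD, toPZ, toP_mul) -!mul_polyC; ring.
Qed.

Lemma B_expand (R : realType) d (a b c f : bform R d) (e : R) :
  bfmul (a + e *: b) (a + e *: b) + bfmul (c + e *: f) (c + e *: f) =
  (bfmul a a + bfmul c c) + e *: ((bfmul a b + bfmul c f) + (bfmul a b + bfmul c f))
  + e *: (e *: (bfmul b b + bfmul f f)).
Proof.
apply: (@toP_inj _ 0); rewrite !(toPD, toPZ, toP_mul) -!mul_polyC; ring.
Qed.

Lemma quad0 (R : realType) (b g : R) : (forall e : R, 0 <= e * b + e ^+ 2 * g) -> b = 0.
Proof.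
move=> h; pose D := `|g| + 1.
have Dp : 0 < D by rewrite /D ltr_pwDr // normr_ge0.
have := h (- b / D).
have hg : g <= `|g| by apply: ler_norm.
have E : - b / D * D = - b by rewrite mulfVK // gt_eqF.
set e := - b / D => he.
have h2 : 0 <= D ^+ 2 * (e * b + e ^+ 2 * g) by apply: mulr_ge0 => //; apply: sqr_ge0.
have h3 : D ^+ 2 * (e * b + e ^+ 2 * g) = D * (e * D) * b + (e * D) ^+ 2 * g by ring.
rewrite h3 E in h2.
have h4 : b ^+ 2 * (g - D) >= 0 by move: h2; rewrite /D; nra.
have : b ^+ 2 <= 0 by move: h4; rewrite /D; nra.
by move=> hb; apply/eqP; rewrite -sqrf_eq0 eq_le hb sqr_ge0.
Qed.

Unset Implicit Arguments.

Theorem corollary6p1 (R : realType) (d : nat)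
  (ip : bform R (d + d) -> bform R (d + d) -> R)
  (Hip : is_inner_product ip)
  (p : bform R (d + d)) (u1 u2 : bform R d)
  (Hgrad : forall v1 v2 : bform R d,
      derive1 (fun t : R => f_p ip p (u1 + t *: v1) (u2 + t *: v2)) 0 = 0)
  (Hhess : forall v1 v2 : bform R d,
      0 <= derive1n 2 (fun t : R => f_p ip p (u1 + t *: v1) (u2 + t *: v2)) 0) :
  forall q : bform R (d + d), is_sos q ->
    f_p ip p u1 u2 <= ipnorm ip (q - p) ^+ 2.
Proof.
case: Hip => ipC ipL ipP.
have ip0l : forall z, ip 0 z = 0.
  move=> z; have h := ipL 1 0 0 z; rewrite scaler0 add0r mul1r in h; lra.
have ipDl : forall x y z, ip (x + y) z = ip x z + ip y z.
  by move=> x y z; have := ipL 1 x y z; rewrite scale1r mul1r.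
have ipZl : forall a x z, ip (a *: x) z = a * ip x z.
  by move=> a x z; have := ipL a x 0 z; rewrite addr0 ip0l addr0.
have ipNl : forall x z, ip (- x) z = - ip x z.
  by move=> x z; rewrite -scaleN1r ipZl mulN1r.
have ipDr : forall x y z, ip z (x + y) = ip z x + ip z y.
  by move=> x y z; rewrite ipC ipDl ![ip _ z]ipC.
have ipZr : forall a x z, ip z (a *: x) = a * ip z x.
  by move=> a x z; rewrite ipC ipZl ipC.
have ipNr : forall x z, ip z (- x) = - ip z x.
  by move=> x z; rewrite ipC ipNl ipC.
have ip0r : forall z, ip z 0 = 0 by move=> z; rewrite ipC ip0l.
have ipge0 : forall x, 0 <= ip x x.
  by move=> x; case: (eqVneq x 0) => [->|/ipP/ltW //]; rewrite ip0l.
have fpE : forall a b, f_p ip p a b = ip (bfmul a a + bfmul b b - p) (bfmul a a + bfmul b b - p).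
  by move=> a b; rewrite /f_p /ipnorm sqr_sqrtr.
set r := bfmul u1 u1 + bfmul u2 u2 - p.
pose S (v1 v2 : bform R d) := bfmul u1 v1 + bfmul u2 v2.
pose B (v1 v2 : bform R d) := bfmul v1 v1 + bfmul v2 v2.
have Xt : forall (v1 v2 : bform R d) (t : R),
    bfmul (u1 + t *: v1) (u1 + t *: v1) + bfmul (u2 + t *: v2) (u2 + t *: v2) - p
    = r + t *: (S v1 v2 + S v1 v2) + t *: (t *: B v1 v2).
  move=> v1 v2 t; apply: (@toP_inj _ 0).
  rewrite /r /S /B !(toPD, toPZ, toP_mul, toPN) -!mul_polyC; ring.
have fexp : forall v1 v2 (t : R), f_p ip p (u1 + t *: v1) (u2 + t *: v2) =
    ip r r + (ip (S v1 v2 + S v1 v2) r *+ 2) * t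
    + (ip (S v1 v2 + S v1 v2) (S v1 v2 + S v1 v2) + ip (B v1 v2) r *+ 2) * t ^+ 2
    + (ip (B v1 v2) (S v1 v2 + S v1 v2) *+ 2) * t ^+ 3 + ip (B v1 v2) (B v1 v2) * t ^+ 4.
  move=> v1 v2 t; rewrite fpE Xt.
  move: (r) (S v1 v2) (B v1 v2) => r0 Sv Bv.
  rewrite !(ipDl, ipDr, ipZl, ipZr) (ipC r0 Sv) (ipC r0 Bv) (ipC Sv Bv).
  ring.
have grad : forall v1 v2, ip (S v1 v2) r = 0.
  move=> v1 v2; have [h1 _] := @deriv_poly4 R (fun t => f_p ip p (u1 + t *: v1) (u2 + t *: v2)) _ _ _ _ _ (fexp v1 v2).
  by move: (Hgrad v1 v2); rewrite h1 ipDl; lra.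
have hess : forall v1 v2, 0 <= 4 * ip (S v1 v2) (S v1 v2) + 2 * ip (B v1 v2) r.
  move=> v1 v2; have [_ h2] := @deriv_poly4 R (fun t => f_p ip p (u1 + t *: v1) (u2 + t *: v2)) _ _ _ _ _ (fexp v1 v2).
  by move: (Hhess v1 v2); rewrite h2 !(ipDl, ipDr); lra.
have SBv0 : forall v1 v2, ip (S v1 v2) r = 0 by [].
have sos_pos : forall g : bform R d, 0 <= ip (bfmul g g) r.
  apply: (@core_bform R d u1 u2 (fun f => ip f r)).
  - by move=> x y; rewrite ipDl.
  - by move=> c x; rewrite ipZl.
  - by move=> z; have := grad z 0; rewrite /S bfmul0r addr0.
  - by move=> z; have := grad 0 z; rewrite /S bfmul0r add0r.
  - move=> v1 v2 h; have := hess v1 v2; rewrite /S h ip0l mulr0 add0r /B; lra.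
  - move=> v1 v2 h h0 z1 z2.
    suff : 4 * ip (bfmul v1 z1 + bfmul v2 z2) r = 0 by lra.
    apply: (@quad0 R _ (4 * ip (S z1 z2) (S z1 z2) + 2 * ip (B z1 z2) r)) => e.
    have := hess (v1 + e *: z1) (v2 + e *: z2).
    rewrite /S /B S_expand h add0r B_expand.
    move: h0; rewrite /S /B.
    move: (bfmul v1 v1 + bfmul v2 v2) (bfmul v1 z1 + bfmul v2 z2)
      (bfmul u1 z1 + bfmul u2 z2) (bfmul z1 z1 + bfmul z2 z2) => Bv W Sz Bz h0.
    rewrite !(ipDl, ipZl, ipZr) h0.
    move: (ip Sz Sz) (ip W r) (ip Bz r) => a b c H.
    by apply: le_trans H _; rewrite le_eqVlt; apply/orP; left; apply/eqP; ring.
move=> q [m [g ->]].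
rewrite fpE -/r /ipnorm sqr_sqrtr ?ipge0 //.
set s := bfmul u1 u1 + bfmul u2 u2.
set Q := \sum_(i < m) bfmul (g i) (g i).
have hs : ip s r = 0 by apply: (grad u1 u2).
have hQ : 0 <= ip Q r.
  rewrite /Q (big_morph (fun x => ip x r) (fun x y => ipDl x y r) (ip0l r)).
  by apply: sumr_ge0 => i _; apply: sos_pos.
have -> : Q - p = (Q - s) + r by rewrite /r -/s addrA subrK.
have hXr : 0 <= ip (Q - s) r by rewrite ipDl ipNl hs subr0.
have hXX := ipge0 (Q - s).
have e1 : ip (Q - s + r) (Q - s + r) = ip (Q - s) (Q - s) + 2 * ip (Q - s) r + ip r r.
  move: (Q - s) (r) => X0 r0; rewrite !(ipDl, ipDr) (ipC r0 X0); ring.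
rewrite e1; lra.
Qed.
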